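(* Let $G$ be a finite simple graph with at least one edge and let $I=I(G)$ be its edge ideal. Then $v(I^{n+1})\le 2n+v(I)$ for all $n\ge 1$.
   Context: $K$ is a field and $S=K[x_1,\dots,x_t]$ is standard graded, with the vertices of $G$ being $x_1,\dots,x_t$. The edge ideal is $I(G)=\langle x_ix_j : \{x_i,x_j\}\text{ an edge of } G\rangle$. For a proper graded ideal $J$, the $v$-number is $v(J)=\min\{k\ge 0 : \exists f\in S_k,\ \mathcal P\in\operatorname{Ass}(S/J) \text{ with } (J:f)=\mathcal P\}$. *)

(* Defs.v *)
From HB Require Import structures.
From mathcomp Require Import all_boot all_order all_algebra.
From mathcomp Require Import mpoly.
Set Implicit Arguments. Unset Strict Implicit. Unset Printing Implicit Defensive.
Import GRing.Theory.
Local Open Scope ring_scope.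

Section Defs.
Variables (K : fieldType) (t : nat).
Local Notation S := {mpoly K[t]}.

Definition pset := S -> Prop.

Definition pset_eq (A B : pset) : Prop := forall f, A f <-> B f.

Definition ideal_gen (A : pset) : pset :=
  fun p => exists s : seq (S * S),
      (forall x, x \in s -> A x.2) /\ p = \sum_(x <- s) x.1 * x.2.

Definition ideal_mul (I J : pset) : pset :=
  ideal_gen (fun p => exists a b, I a /\ J b /\ p = a * b).

Fixpoint ideal_pow (I : pset) (m : nat) : pset :=
  match m with
  | 0%N => fun _ => True
  | m'.+1 => ideal_mul (ideal_pow I m') I
  end.

Definition colon (J : pset) (f : S) : pset := fun g => J (g * f).

Definition prime_ideal (P : pset) : Prop :=
  [/\ P 0,
      (forall a b, P a -> P b -> P (a + b)),
      (forall r a, P a -> P (r * a)),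
      ~ P 1
    & (forall a b, P (a * b) -> P a \/ P b)].

(* Associated primes of S/J: primes of the form (J : g). *)
Definition Ass (J : pset) (P : pset) : Prop :=
  prime_ideal P /\ exists g : S, pset_eq P (colon J g).

(* Homogeneous of (standard) degree k, i.e. f \in S_k (0 is in every S_k). *)
Definition homog_deg (k : nat) (f : S) : bool := f \is ishomog1 k mdeg.

Definition v_witness (J : pset) (k : nat) : Prop :=
  exists f : S, homog_deg k f /\
    exists P : pset, Ass J P /\ pset_eq (colon J f) P.

Definition is_v_number (J : pset) (v : nat) : Prop :=
  v_witness J v /\ forall k, v_witness J k -> (v <= k)%N.

Definition edge_ideal (E : rel 'I_t) : pset :=
  ideal_gen (fun p => exists i j : 'I_t, E i j /\ p = 'X_i * 'X_j).

End Defs.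

(* Main.v *)
Require Import Defs.
From HB Require Import structures.
From mathcomp Require Import all_boot all_order all_algebra.
From mathcomp Require Import mpoly.
From mathcomp Require Import ring.
From Stdlib Require Import Classical.
Set Implicit Arguments. Unset Strict Implicit. Unset Printing Implicit Defensive.
Import GRing.Theory.
Local Open Scope ring_scope.

Section Gen.
Variables (K : fieldType) (t : nat).
Local Notation S := {mpoly K[t]}.
Local Notation mono := 'X_{1..t}.

Definition allm (Q : mono -> Prop) (p : S) : Prop := forall m, m \in msupp p -> Q m.
Definition upclosed (Q : mono -> Prop) := forall m1 m2 : mono, Q m2 -> Q (m1 + m2)%MM.

Lemma allm0 Q : allm Q 0.
Proof. by move=> m; rewrite mcoeff_msupp mcoeff0 eqxx. Qed.

Lemma allmD Q a b : allm Q a -> allm Q b -> allm Q (a + b).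
Proof. by move=> Ha Hb m /msuppD_le; rewrite mem_cat => /orP [/Ha|/Hb]. Qed.

Lemma allmM Q r a : upclosed Q -> allm Q a -> allm Q (r * a).
Proof.
move=> HQ Ha m /msuppM_le /allpairsP [[m1 m2]] /= [_ H2 ->].
exact/HQ/Ha.
Qed.

Lemma allmZ Q c a : allm Q a -> allm Q (c *: a).
Proof. by move=> Ha m /msuppZ_le /Ha. Qed.

Lemma allmX Q m : Q m -> allm Q 'X_[m].
Proof. by move=> Hm m'; rewrite msuppX mem_seq1 => /eqP ->. Qed.

Lemma allm_sum Q (I : Type) (r : seq I) (P : pred I) (F : I -> S) :
  (forall i, P i -> allm Q (F i)) -> allm Q (\sum_(i <- r | P i) F i).
Proof.
move=> H; elim: r => [|x r IH]; first by rewrite big_nil; apply: allm0.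
rewrite big_cons; case: ifP => Px //; exact: allmD (H _ Px) IH.
Qed.

Lemma allm_gen Q (A : pset K t) p : upclosed Q ->
  (forall q, A q -> allm Q q) -> ideal_gen A p -> allm Q p.
Proof.
move=> HQ HA [s [Hs ->]]; elim: s Hs => [|x s IH] Hs.
  by rewrite big_nil; apply: allm0.
rewrite big_cons; apply: allmD; last by apply: IH => y Hy; apply: Hs; rewrite inE Hy orbT.
by apply: allmM => //; apply: HA; apply: Hs; rewrite inE eqxx.
Qed.

Definition is_ideal (J : pset K t) :=
  [/\ J 0, (forall a b, J a -> J b -> J (a + b)) & (forall r a, J a -> J (r * a))].

Lemma gen_ideal A : is_ideal (ideal_gen A).
Proof.
split.
- by exists [::]; rewrite big_nil.
- move=> a b [s [Hs ->]] [s' [Hs' ->]]; exists (s ++ s'); rewrite big_cat; split => //.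
  by move=> x; rewrite mem_cat => /orP [/Hs|/Hs'].
- move=> r a [s [Hs ->]]; exists [seq (r * x.1, x.2) | x <- s]; split.
    by move=> x /mapP [y Hy ->] /=; apply: Hs.
  by rewrite big_map mulr_sumr; apply: eq_bigr => x _ /=; rewrite mulrA.
Qed.

Lemma gen_sub (A : pset K t) p : A p -> ideal_gen A p.
Proof.
move=> Ap; exists [:: (1, p)]; split; first by move=> x; rewrite inE => /eqP ->.
by rewrite big_cons big_nil /= mul1r addr0.
Qed.

Lemma pow_ideal (I : pset K t) k : is_ideal (ideal_pow I k).
Proof. by case: k => [|k] /=; [split | apply: gen_ideal]. Qed.

Lemma pow_mul (I : pset K t) k a b : ideal_pow I k a -> I b -> ideal_pow I k.+1 (a * b).
Proof. by move=> Ha Hb; apply: gen_sub; exists a, b. Qed.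

Lemma ideal_monos (J : pset K t) p : is_ideal J ->
  (forall m, m \in msupp p -> J 'X_[m]) -> J p.
Proof.
move=> [J0 JD JM] H; rewrite (mpolyE p) big_seq.
apply: (big_ind J) => // m Hm; rewrite -mul_mpolyC; exact/JM/H.
Qed.

Lemma min_exists (Pr : nat -> Prop) k : Pr k ->
  exists w, (Pr w /\ forall j, Pr j -> (w <= j)%N) /\ (w <= k)%N.
Proof.
elim: k {-2}k (leqnn k) => [|k IH] j Hj Pj.
  exists j; split=> //; split=> // i _; move: Hj; rewrite leqn0 => /eqP ->//.
case: (classic (exists i, (i < j)%N /\ Pr i)) => [[i [Hi Pi]]|Hno].
  have [w [Hw Hwi]] := IH i (leq_trans (leq_trans Hi Hj) (leqnn _)) Pi.
  have Hik : (i <= k)%N by rewrite -ltnS (leq_trans Hi Hj).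
  have [w' [Hw' Hw'i]] := IH i Hik Pi.
  by exists w'; split=> //; apply: leq_trans Hw'i (ltnW Hi).
exists j; split=> //; split=> // i Pi; rewrite leqNgt; apply/negP => Hi.
by apply: Hno; exists i.
Qed.

End Gen.
Section Main.
Variables (K : fieldType) (t : nat) (E : rel 'I_t).
Hypothesis Esym : forall i j : 'I_t, E i j = E j i.
Hypothesis Eirr : forall i : 'I_t, E i i = false.
Local Notation S := {mpoly K[t]}.
Local Notation mono := 'X_{1..t}.
Local Notation I := (@edge_ideal K t E).

Definition ED (mm : mono) : bool :=
  [exists i, exists j, [&& E i j, (0 < mm i)%N & (0 < mm j)%N]].

Lemma edge_in i j : E i j -> I ('X_i * 'X_j).
Proof. by move=> Eij; apply: gen_sub; exists i, j. Qed.

Lemma XX i j : 'X_i * 'X_j = 'X_[U_(i) + U_(j)] :> S.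
Proof. by rewrite mpolyXD. Qed.

Lemma I_ED p : I p -> allm ED p.
Proof.
apply: allm_gen.
  move=> m1 m2 /existsP [i /existsP [j /and3P [Eij Hi Hj]]].
  apply/existsP; exists i; apply/existsP; exists j; rewrite Eij !mnmDE.
  by rewrite (leq_trans Hi (leq_addl _ _)) (leq_trans Hj (leq_addl _ _)).
move=> q [i [j [Eij ->]]]; rewrite XX; apply: allmX.
apply/existsP; exists i; apply/existsP; exists j; rewrite Eij !mnmDE !mnm1E eqxx /=.
by rewrite eqxx addn1.
Qed.

Lemma ED_I p : allm ED p -> I p.
Proof.
move=> H; apply: ideal_monos; first exact: gen_ideal.
move=> m /H /existsP [i /existsP [j /and3P [Eij Hi Hj]]].
have nij : i != j by apply/eqP => eij; move: Eij; rewrite eij Eirr.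
have Hle : (U_(i) + U_(j) <= m)%MM.
  apply/mnm_lepP => k; rewrite mnmDE !mnm1E.
  case: (i =P k) => [eik|_]; case: (j =P k) => [ejk|_] //=.
  - by move: nij; rewrite eik ejk eqxx.
  - by rewrite -eik addn0.
  - by rewrite -ejk.
rewrite -(submK Hle) mpolyXD -XX.
have [_ _ HM] := @gen_ideal K t (fun p => exists i j, E i j /\ p = 'X_i * 'X_j).
by apply: HM; apply: edge_in.
Qed.

Section NB.
Variable m0 : mono.
Definition NB (v : 'I_t) : bool := [exists b, E v b && (0 < m0 b)%N].
Definition wt (mm : mono) : nat := (\sum_(v < t) NB v * mm v)%N.

Lemma wtD m1 m2 : wt (m1 + m2)%MM = (wt m1 + wt m2)%N.
Proof. by rewrite /wt -big_split; apply: eq_bigr => v _; rewrite mnmDE mulnDr. Qed.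

Lemma wtU x : wt U_(x)%MM = NB x.
Proof.
rewrite /wt (bigD1 x) //= mnm1E eqxx muln1 big1 ?addn0 // => v nv.
by rewrite mnm1E eq_sym (negbTE nv) muln0.
Qed.

Lemma wtMn mm k : wt (mm *+ k)%MM = (wt mm * k)%N.
Proof. by rewrite /wt big_distrl; apply: eq_bigr => v _; rewrite mulmnE mulnA. Qed.

Lemma wt0 : wt 0%MM = 0%N.
Proof. by rewrite /wt big1 // => v _; rewrite mnm0E muln0. Qed.

Definition Wge k (p : S) := allm (fun mm => (k <= wt mm)%N) p.

Lemma Wge_up k : upclosed (fun mm : mono => (k <= wt mm)%N).
Proof. by move=> m1 m2 H; rewrite wtD (leq_trans H (leq_addl _ _)). Qed.

Lemma WgeM k1 k2 a b : Wge k1 a -> Wge k2 b -> Wge (k1 + k2) (a * b).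
Proof.
move=> Ha Hb m /msuppM_le /allpairsP [[m1 m2]] /= [H1 H2 ->].
by rewrite wtD leq_add // ?Ha ?Hb.
Qed.

Hypothesis cover : forall i j, E i j -> NB i || NB j.

Lemma I_W1 p : I p -> Wge 1 p.
Proof.
apply: allm_gen; first exact: Wge_up.
move=> q [i [j [Eij ->]]]; rewrite XX; apply: allmX.
by rewrite wtD !wtU; move: (cover Eij); case: (NB i); case: (NB j).
Qed.

Lemma pow_W k p : ideal_pow I k p -> Wge k p.
Proof.
elim: k p => [|k IH] p /=; first by move=> _ m _.
apply: allm_gen; first exact: Wge_up.
move=> q [a [b [Ha [Hb ->]]]]; rewrite -addn1; apply: WgeM; [exact: IH | exact: I_W1].
Qed.

Lemma Wge_split p : exists p0 p1, [/\ p = p0 + p1, allm (fun mm => wt mm == 0%N) p0 & Wge 1 p1].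
Proof.
exists (\sum_(mm <- msupp p | wt mm == 0%N) p@_mm *: 'X_[mm]).
exists (\sum_(mm <- msupp p | ~~ (wt mm == 0%N)) p@_mm *: 'X_[mm]).
split.
- by rewrite {1}(mpolyE p) (bigID (fun mm => wt mm == 0%N)) /=.
- by apply: allm_sum => mm H; apply: allmZ; apply: allmX.
- apply: allm_sum => mm H; apply: allmZ; apply: allmX; by rewrite lt0n.
Qed.

Lemma W1_prime : prime_ideal (Wge 1).
Proof.
split.
- exact: allm0.
- by move=> a b; apply: allmD.
- by move=> r a; apply: allmM; apply: Wge_up.
- move=> H; have := H 0%MM; rewrite -mpolyX0 msuppX mem_seq1 eqxx wt0 => /(_ isT) //.
- move=> a b Hab.
  have [a0 [a1 [ea Ha0 Ha1]]] := Wge_split a.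
  have [b0 [b1 [eb Hb0 Hb1]]] := Wge_split b.
  have W0 : Wge 1 (a0 * b0).
    have -> : a0 * b0 = a * b + (-1) * (b * a1 + a0 * b1) by rewrite ea eb; ring.
    apply: allmD => //; apply: allmM; first exact: Wge_up.
    by apply: allmD; apply: allmM => //; apply: Wge_up.
  have Z0 : allm (fun mm => wt mm == 0%N) (a0 * b0).
    move=> m /msuppM_le /allpairsP [[m1 m2]] /= [H1 H2 ->].
    by rewrite wtD (eqP (Ha0 _ H1)) (eqP (Hb0 _ H2)).
  have : a0 * b0 = 0.
    apply: msuppnil0; case Es: (msupp (a0 * b0)) => [//|x s].
    have Hx : x \in msupp (a0 * b0) by rewrite Es inE eqxx.
    by have := W0 _ Hx; rewrite (eqP (Z0 _ Hx)).
  move/eqP; rewrite mulf_eq0 => /orP [/eqP e0|/eqP e0].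
  + by left; rewrite ea e0 add0r.
  + by right; rewrite eb e0 add0r.
Qed.

Lemma powX k e : I e -> ideal_pow I k (e ^+ k).
Proof.
move=> He; elim: k => [|k IH] //=.
by rewrite exprSr; apply: pow_mul.
Qed.

Hypothesis indep : forall v, NB v -> m0 v = 0%N.
Variables (a u : 'I_t) (n : nat).
Hypothesis Eua : E u a.
Hypothesis Ha : (0 < m0 a)%N.
Hypothesis Nu : NB u.
Hypothesis Na : NB a = false.

Definition M := (m0 + (U_(a) + U_(u)) *+ n)%MM.

Lemma wtM : wt M = n.
Proof.
rewrite /M wtD wtMn wtD !wtU Na Nu /= mul1n.
rewrite /wt big1 // => v _; case Nv: (NB v); last by rewrite mul0n.
by rewrite indep // muln0.
Qed.

Lemma colonM g : colon (ideal_pow I n.+1) 'X_[M] g <-> Wge 1 g.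
Proof.
split.
- move=> /pow_W H mm Hmm.
  have Hin : (M + mm)%MM \in msupp (g * 'X_[M]).
    by rewrite mcoeff_msupp mcoeffMX -mcoeff_msupp.
  by have := H _ Hin; rewrite wtD wtM -addn1 leq_add2l.
- move=> H; apply: ideal_monos.
    have [P0 PD PM] := pow_ideal I n.+1.
    split; rewrite /colon.
    + by rewrite mul0r.
    + by move=> x y Hx Hy; rewrite mulrDl; apply: PD.
    + by move=> r x Hx; rewrite -mulrA; apply: PM.
  move=> mm /H Hmm; rewrite /colon.
  case: (pickP (fun v => NB v && (0 < mm v)%N)) => [v /andP [Nv Hv] | Hn]; last first.
    move: Hmm; rewrite /wt big1 // => v _; move: (Hn v) => /=.
    by case: (NB v) => //=; rewrite lt0n => /negbFE /eqP ->; rewrite muln0.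
  have /existsP [b /andP [Evb Hb]] := Nv.
  have -> : 'X_[mm] = 'X_[(mm - U_(v))%MM] * 'X_v :> S.
    by rewrite -mpolyXD submK // lep1mP -lt0n.
  have -> : 'X_[M] = 'X_[(m0 - U_(b))%MM] * 'X_b * ('X_a * 'X_u) ^+ n :> S.
    have Hb' : (U_(b) <= m0)%MM by rewrite lep1mP -lt0n.
    rewrite /M -{1}(submK Hb') !mpolyXD -mpolyXD; congr (_ * _).
    elim: n => [|k IHk]; first by rewrite mulm0n mpolyX0 expr0.
    by rewrite mulmS mpolyXD IHk exprS -mpolyXD.
  have key : ideal_pow I n.+1 (('X_a * 'X_u) ^+ n * ('X_v * 'X_b)).
    apply: pow_mul; first (apply: powX; apply: edge_in; by rewrite Esym).
    exact: edge_in.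
  have [_ _ PM] := pow_ideal I n.+1.
  have -> : 'X_[(mm - U_(v))%MM] * 'X_v * ('X_[(m0 - U_(b))%MM] * 'X_b * ('X_a * 'X_u) ^+ n)
     = ('X_[(mm - U_(v))%MM] * 'X_[(m0 - U_(b))%MM]) * (('X_a * 'X_u) ^+ n * ('X_v * 'X_b)) :> S by ring.
  exact: PM.
Qed.

End NB.
End Main.
Theorem proposition4p15 (K : fieldType) (t : nat) (E : rel 'I_t)
  (Esym : forall i j : 'I_t, E i j = E j i) (Eirr : forall i : 'I_t, E i i = false)
  (Hedge : exists i j : 'I_t, E i j)
  (vI : nat) (HvI : is_v_number (@edge_ideal K t E) vI)
  (n : nat) (Hn : (1 <= n)%N) :
  exists w : nat,
    is_v_number (ideal_pow (@edge_ideal K t E) n.+1) w /\ (w <= 2 * n + vI)%N.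
Proof.
have [[f [Hf [P [[Pprime [g Hg]] HfP]]]] _] := HvI.
case: Pprime => P0 PD PM P1 Pmul.
have [I0 ID IM] := @gen_ideal K t (fun p => exists i j, E i j /\ p = 'X_i * 'X_j).
have Icol : forall q, edge_ideal E q -> P q.
  by move=> q Iq; apply/HfP; rewrite /colon mulrC; apply: IM.
have nIf : ~ edge_ideal E f.
  by move=> If; apply: P1; apply/HfP; rewrite /colon mul1r.
have [m0 Hm0 nED] : exists2 m0, m0 \in msupp f & ~~ ED E m0.
  case: (boolP (has (fun mm => ~~ ED E mm) (msupp f))) => [/hasP [mm H1 H2]|/hasPn H].
    by exists mm.
  by exfalso; apply: nIf; apply: (ED_I Eirr) => mm /H /negbNE.
have coverC : forall c, P 'X_c -> NB E m0 c.
  move=> c /HfP; rewrite /colon => /I_ED Hc.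
  have Hin : (U_(c) + m0)%MM \in msupp ('X_c * f).
    by rewrite mulrC mcoeff_msupp mcoeffMX -mcoeff_msupp.
  have /existsP [i /existsP [j /and3P [Eij Hi Hj]]] := Hc _ Hin.
  rewrite !mnmDE !mnm1E in Hi Hj.
  case: (c =P i) => [eci | nci].
    case: (c =P j) => [ecj | ncj].
      by move: Eij; rewrite -eci -ecj Eirr.
    apply/existsP; exists j; rewrite eci Eij /=.
    by move: Hj; case: eqP.
  have Hi' : (0 < m0 i)%N by move: Hi; case: eqP.
  case: (c =P j) => [ecj | ncj].
    by apply/existsP; exists i; rewrite ecj Esym Eij.
  have Hj' : (0 < m0 j)%N by move: Hj; case: eqP.
  by exfalso; move/negP: nED; apply; apply/existsP; exists i; apply/existsP; exists j; rewrite Eij Hi' Hj'.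
have cover : forall i j, E i j -> NB E m0 i || NB E m0 j.
  move=> i j Eij; have := Icol _ (@edge_in K _ _ _ _ Eij) => /Pmul [/coverC ->//|/coverC ->].
  by rewrite orbT.
have indep : forall v, NB E m0 v -> m0 v = 0%N.
  move=> v /existsP [b /andP [Evb Hb]]; apply/eqP; rewrite -leqn0 leqNgt; apply/negP => Hv.
  by move/negP: nED; apply; apply/existsP; exists v; apply/existsP; exists b; rewrite Evb Hv Hb.
have [u [a [Eua [Ha Nu]]]] : exists u a, [/\ E u a, (0 < m0 a)%N & NB E m0 u].
  have [i [j Eij]] := Hedge.
  by case/orP: (cover _ _ Eij) => Nx; move: (Nx) => /existsP [b /andP [E' Hb]]; [exists i | exists j]; exists b.
have Na : NB E m0 a = false.
  by case Nb: (NB E m0 a) => //; move: Ha; rewrite (indep _ Nb).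
have Hwit : v_witness (ideal_pow (@edge_ideal K t E) n.+1) (mdeg (M m0 a u n)).
  exists 'X_[M m0 a u n]; split; first by rewrite /homog_deg dhomogX.
  exists (Wge E m0 1); split.
    split; first exact: W1_prime.
    exists 'X_[M m0 a u n] => q; split => /(colonM Esym cover indep n Eua Nu Na) //.
  by move=> q; apply: (colonM Esym cover indep n Eua Nu Na).
have [w [Hw Hle]] := min_exists Hwit.
exists w; split => //.
move: Hle; rewrite /M mdegD mdegMn mdegD !mdeg1 (dhomog_mf Hf Hm0).
by rewrite addnC.
Qed.
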